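(* Let $P$ be a finite poset and $\mathcal{J}\subseteq\mathrm{Hom}(P,\mathbb{N})$ a poset ideal with complement filter $\mathcal{J}^c$. The set of monomials in $L^p(\mathcal{J},P)$ is precisely $\{\overline{\Lambda}\phi:\phi\in\mathcal{J}^c\}$. Equivalently, the monomials of $k[x_P]$ not in $L^p(\mathcal{J},P)$ are precisely the $\overline{\Lambda}\phi$ for $\phi\in\mathcal{J}$.
   Context: $\mathbb{N}=\{0,1,\dots\}$; $\mathrm{Hom}(P,\mathbb{N})$ is the set of isotone maps $P\to\mathbb{N}$ ordered pointwise. The ascent is $\Lambda\phi=\{(p,i)\in P\times\mathbb{N}:\phi(q)\le i<\phi(p)\ \forall q<p\}$ and $\overline{\Lambda}\phi=\prod_{(p,i)\in\Lambda\phi}x_p\in k[x_P]$, $k$ a field. The letterplace ideal $L(\mathcal{J},P)\subseteq k[x_{P\times\mathbb{N}}]$ is generated by the monomials $\prod_{(p,i)\in\Lambda\phi}x_{p,i}$ for $\phi\in\mathcal{J}^c$, and $L^p(\mathcal{J},P)$ is the ideal of $k[x_P]$ generated by the images of these generators under $x_{p,i}\mapsto x_p$. *)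

(* Defs.v *)
From HB Require Import structures.
From mathcomp Require Import all_boot all_order all_algebra.
From mathcomp Require Import mpoly.
Set Implicit Arguments. Unset Strict Implicit. Unset Printing Implicit Defensive.
Import Order.Theory GRing.Theory.

(* The finite poset P is a [finPOrderType d]; the polynomial ring k[x_P] is
   {mpoly k[#|P|]}, the variable x_p being 'X_(enum_rank p). *)

Section Defs.
Context {d : Order.disp_t} (P : finPOrderType d) (k : fieldType).

Definition isotone (phi : {ffun P -> nat}) : Prop :=
  forall p q : P, (p <= q)%O -> (phi p <= phi q)%N.

Definition hom_ideal (J : {ffun P -> nat} -> Prop) : Prop :=
  (forall phi, J phi -> isotone phi) /\
  (forall phi psi : {ffun P -> nat}, isotone psi -> (forall p, (psi p <= phi p)%N) -> J phi -> J psi).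

Definition compl_in_hom (J : {ffun P -> nat} -> Prop) (phi : {ffun P -> nat}) : Prop :=
  isotone phi /\ ~ J phi.

Definition in_ascent (phi : {ffun P -> nat}) (p : P) (i : nat) : bool :=
  [forall q : P, (q < p)%O ==> (phi q <= i)%N] && (i < phi p)%N.

Definition xvar (p : P) : {mpoly k[#|P|]} := 'X_(enum_rank p).

(* \overline{Lambda} phi = prod_{(p,i) in Lambda phi} x_p ; note (p,i) in Lambda phi
   forces i < phi p, so the product is over a finite range. *)
Definition lambdabar (phi : {ffun P -> nat}) : {mpoly k[#|P|]} :=
  (\prod_(p : P) \prod_(i < phi p | in_ascent phi p i) xvar p)%R.

Definition in_ideal_gen n (G : {mpoly k[n]} -> Prop) (f : {mpoly k[n]}) : Prop :=
  exists s : seq ({mpoly k[n]} * {mpoly k[n]}),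
    (forall x, x \in s -> G x.2) /\ f = (\sum_(x <- s) x.1 * x.2)%R.

(* generators of L^p(J,P): images of the letterplace generators, i.e. lambdabar phi
   for phi in J^c *)
Definition Lp_gens (J : {ffun P -> nat} -> Prop) (g : {mpoly k[#|P|]}) : Prop :=
  exists phi, compl_in_hom J phi /\ g = lambdabar phi.

Definition in_Lp (J : {ffun P -> nat} -> Prop) (f : {mpoly k[#|P|]}) : Prop :=
  in_ideal_gen (Lp_gens J) f.

End Defs.

Arguments lambdabar {d P} k phi.
Arguments in_Lp {d P} k J f.

(* Main.v *)
Require Import Defs.
From HB Require Import structures.
From mathcomp Require Import all_boot all_order all_algebra.
From mathcomp Require Import mpoly.
From Stdlib Require Import Classical.
From mathcomp Require Import zify.

Set Implicit Arguments. Unset Strict Implicit. Unset Printing Implicit Defensive.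
Import Order.Theory GRing.Theory.

Section Aux.
Context {d : Order.disp_t} (P : finPOrderType d).

Definition Mx (phi : {ffun P -> nat}) (p : P) : nat := \max_(q | (q < p)%O) phi q.
Definition cnt (phi : {ffun P -> nat}) (p : P) : nat :=
  #|[pred i : 'I_(phi p) | in_ascent phi p i]|.

Lemma asc_iff phi p i : in_ascent phi p i = (Mx phi p <= i) && (i < phi p).
Proof.
rewrite /in_ascent; congr andb; apply/idP/idP.
- move/forallP=> H; apply/bigmax_leqP=> q qp; exact: (implyP (H q) qp).
- move/bigmax_leqP=> H; apply/forallP=> q; apply/implyP=> qp; exact: H.
Qed.

Lemma sum_ge N M : \sum_(0 <= i < N | M <= i) 1 = N - M.
Proof.
elim: N => [|N IH]; first by rewrite big_geq.
rewrite big_mkcond big_nat_recr //= -big_mkcond IH.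
case: leqP => H; lia.
Qed.

Lemma cnt_eq phi p : cnt phi p = phi p - Mx phi p.
Proof.
rewrite /cnt -sum1_card.
rewrite (eq_bigl (fun i : 'I_(phi p) => Mx phi p <= i)); last first.
  by move=> i; rewrite /= inE asc_iff ltn_ord andbT.
by rewrite -(big_mkord (fun i => Mx phi p <= i) (fun _ => 1)) sum_ge.
Qed.

Lemma isotone_M phi p : isotone phi -> Mx phi p <= phi p.
Proof. by move=> iso; apply/bigmax_leqP=> q qp; apply: iso; apply: ltW. Qed.

Definition below (p : P) := [pred q : P | (q < p)%O].

Lemma below_lt p q : (q < p)%O -> #|below q| < #|below p|.
Proof.
move=> qp; apply: proper_card; apply/properP; split.
  by apply/subsetP=> r; rewrite !inE => rq; apply: lt_trans rq qp.
by exists q; rewrite !inE ?ltxx.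
Qed.

Lemma below_card p : #|below p| < #|P|.
Proof.
have: below p \proper predT.
  by apply/properP; split; [apply/subsetP | exists p; rewrite ?inE ?ltxx].
move/proper_card; exact.
Qed.

Lemma cnt_le_le (psi phi : {ffun P -> nat}) : isotone psi -> isotone phi ->
  (forall p, cnt psi p <= cnt phi p) -> forall p, psi p <= phi p.
Proof.
move=> ips iph hc.
suff H : forall N p, #|below p| < N -> psi p <= phi p.
  by move=> p; apply: (H #|below p|.+1).
elim=> [//|N IH] p hp.
have e1 := cnt_eq psi p; have e2 := cnt_eq phi p.
have m1 := isotone_M p ips; have m2 := isotone_M p iph.
have hM : Mx psi p <= Mx phi p.
  rewrite /Mx; apply/bigmax_leqP=> q qp.
  have Hq : psi q <= phi q by apply: IH; have := below_lt qp; lia.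
  apply: (leq_trans Hq).
  exact: (leq_bigmax_cond (P := fun r => (r < p)%O) (F := phi) q qp).
have := hc p; lia.
Qed.

Fixpoint iterf (m : P -> nat) (N : nat) (p : P) : nat :=
  match N with 0 => 0 | N'.+1 => m p + \max_(q | (q < p)%O) iterf m N' q end.

Lemma iterf_stab m N p : #|below p| < N -> iterf m N p = iterf m N.+1 p.
Proof.
elim: N p => [//|N IH] p hp /=; congr addn; apply: eq_bigr => q qp.
apply: IH; have := below_lt qp; lia.
Qed.

Definition phim (m : P -> nat) : {ffun P -> nat} := [ffun p => iterf m #|P| p].

Lemma phimE m p : phim m p = m p + Mx (phim m) p.
Proof.
rewrite /phim ffunE iterf_stab ?below_card //= /Mx.
by congr addn; apply: eq_bigr => q _; rewrite ffunE.
Qed.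

Lemma phim_iso m : isotone (phim m).
Proof.
move=> p q; rewrite le_eqVlt => /orP [/eqP -> //|pq].
rewrite (phimE m q); apply: (leq_trans _ (leq_addl _ _)).
exact: (leq_bigmax_cond (P := fun r => (r < q)%O) p pq).
Qed.

Lemma phim_cnt m p : cnt (phim m) p = m p.
Proof. by rewrite cnt_eq {1}phimE addnK. Qed.

End Aux.

Section Poly.
Context {d : Order.disp_t} (P : finPOrderType d) (k : fieldType).
Local Open Scope ring_scope.

Definition Amn (phi : {ffun P -> nat}) : 'X_{1..#|P|} :=
  [multinom cnt phi (enum_val i) | i < #|P|].

Lemma lambdabarE phi : lambdabar k phi = 'X_[Amn phi].
Proof.
rewrite /lambdabar.
transitivity (\prod_(p : P) ('X_[U_(enum_rank p)] : {mpoly k[#|P|]}) ^+ cnt phi p).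
  apply: eq_bigr => p _; rewrite /xvar /cnt -prodr_const.
  by apply: eq_bigl => i; rewrite inE.
rewrite mprodXnE; congr 'X_[_]; apply/mnmP => i.
rewrite mnm_sumE mnmE (bigD1 (enum_val i)) //= mulmnE mnm1E enum_valK eqxx mul1n.
rewrite big1 ?addn0 // => p ne; rewrite mulmnE mnm1E.
case: eqP => [E|]; last by rewrite ?muln0 ?mul0n.
by move: ne; rewrite -E enum_rankK eqxx.
Qed.

Lemma coef_notdiv (c : {mpoly k[#|P|]}) a m :
  ~~ (a <= m)%MM -> (c * 'X_[a])@_m = 0.
Proof.
move=> H; rewrite mcoeffM big1 // => kk /eqP E; rewrite mcoeffX.
case: eqP => [Ea|]; last by rewrite mulr0.
by move/negP: H; case; rewrite E -Ea; apply: lem_addl.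
Qed.

Lemma Amn_le (psi phi : {ffun P -> nat}) : isotone psi -> isotone phi ->
  (Amn psi <= Amn phi)%MM -> forall p, (psi p <= phi p)%N.
Proof.
move=> i1 i2 /mnm_lepP H; apply: cnt_le_le => // p.
by have := H (enum_rank p); rewrite !mnmE enum_rankK.
Qed.

Lemma Amn_phim (m : 'X_{1..#|P|}) : Amn (phim (fun p => m (enum_rank p))) = m.
Proof. by apply/mnmP => i; rewrite mnmE phim_cnt enum_valK. Qed.

Lemma mX_inj (a b : 'X_{1..#|P|}) : ('X_[a] : {mpoly k[#|P|]}) = 'X_[b] -> a = b.
Proof.
move=> E; have := congr1 (mcoeff a) E; rewrite !mcoeffX eqxx.
by case: eqP => // _ /eqP; rewrite oner_eq0.
Qed.

End Poly.

Theorem corollary3p6 (d : Order.disp_t) (P : finPOrderType d) (k : fieldType)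
    (J : {ffun P -> nat} -> Prop) (hJ : hom_ideal J) :
  (forall m : 'X_{1..#|P|},
     in_Lp k J 'X_[m] <-> exists phi, compl_in_hom J phi /\ 'X_[m] = lambdabar k phi)
  /\
  (forall m : 'X_{1..#|P|},
     ~ in_Lp k J 'X_[m] <-> exists phi, isotone phi /\ J phi /\ 'X_[m] = lambdabar k phi).
Proof.
have part1 : forall m : 'X_{1..#|P|},
     in_Lp k J 'X_[m] <-> exists phi, compl_in_hom J phi /\ 'X_[m] = lambdabar k phi.
  move=> m; set f := phim (fun p => m (enum_rank p)).
  have fi : isotone f := phim_iso _.
  have fA : Amn f = m := Amn_phim m.
  split.
  - move=> [s [Hs Hsum]].
    case: (classic (J f)) => Jf; last first.
      by exists f; split => //; rewrite lambdabarE fA.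
    exfalso.
    have := congr1 (mcoeff m) Hsum; rewrite mcoeffX eqxx raddf_sum /=.
    rewrite big1_seq; first by move/eqP; rewrite oner_eq0.
    move=> x /andP [_ xs]; have [psi [[ipsi npsi] e]] := Hs x xs.
    rewrite e lambdabarE; apply: coef_notdiv; apply/negP => le.
    apply: npsi; apply: (hJ.2 f) => //; apply: Amn_le => //; by rewrite fA.
  - move=> [phi [Hphi E]]; exists [:: (1%R, 'X_[m])]; split.
      by move=> x; rewrite inE => /eqP -> /=; exists phi.
    by rewrite big_seq1 /= mul1r.
split => // m; split.
- move=> nIn; set f := phim (fun p => m (enum_rank p)).
  have fi : isotone f := phim_iso _.
  have fA : Amn f = m := Amn_phim m.
  have E : 'X_[m] = lambdabar k f by rewrite lambdabarE fA.
  exists f; split => //; split => //.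
  case: (classic (J f)) => // nJ; exfalso; apply: nIn; apply/part1.
  by exists f.
- move=> [phi [iphi [Jphi E]]] /part1 [psi [[ipsi npsi] E']].
  rewrite lambdabarE in E; rewrite lambdabarE in E'.
  have e : Amn psi = Amn phi by rewrite -(mX_inj E) (mX_inj E').
  apply: npsi; apply: (hJ.2 phi) => //; apply: Amn_le => //; by rewrite e lepm_refl.
Qed.
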